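(* The 1D aTAM is not intrinsically universal: there is no finite 1D tile set $U$ (and temperature $\tau'$) with computable functions $\mathcal{R},S$ such that every 1D aTAM system $\mathcal{T}$ is simulated, at some scale $m$ under $\mathcal{R}(\mathcal{T})$, by the 1D aTAM system $(U,S(\mathcal{T}),\tau')$.
   Context: 1D aTAM: a tile type has a west glue and an east glue, each a pair (finite string label, nonnegative integer strength); a tile set is a finite set of tile types. Assemblies are partial functions $\alpha:\mathbb{Z}\dashrightarrow T$ whose domain is a nonempty interval; adjacent tiles interact if the east glue of the left tile equals the west glue of the right tile with positive strength; $\alpha$ is $\tau$-stable if every cut between consecutive tiles has interaction strength $\ge\tau$. A system $\mathcal{T}=(T,\sigma,\tau)$ has finite $\tau$-stable seed $\sigma$; growth proceeds by single $\tau$-stable tile additions (finite or infinite assembly sequences, result = limit); $\mathcal{A}[\mathcal{T}]$ are the producible assemblies and $\mathcal{A}_\Box[\mathcal{T}]$ the producible ones to which no tile can be added. Simulation: an $m$-block over $S$ is a partial function $\{0,\dots,m-1\}\dashrightarrow S$; $\alpha^m_x$ is $i\mapsto\alpha(mx+i)$. A partial $R$ from $m$-blocks to $T$ is valid if $\alpha\sqsubseteq\beta$, $\alpha\in\mathrm{dom}R$ imply $R(\beta)=R(\alpha)$; $R^*(\alpha')$ is $x\mapsto R(\alpha'^m_x)$. $\alpha'$ maps cleanly if each nonempty block at $x$ has $x$ or $x\pm1$ in $\mathrm{dom}\,R^*(\alpha')$ (or there is at most one nonempty block). $\mathcal{S}$ simulates $\mathcal{T}$ under $R$ if: (i) $R^*$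 maps $\mathcal{A}[\mathcal{S}]$ onto $\mathcal{A}[\mathcal{T}]$ and $\mathcal{A}_\Box[\mathcal{S}]$ onto $\mathcal{A}_\Box[\mathcal{T}]$, all producible assemblies mapping cleanly; (ii) producible $\alpha'\to^\mathcal{S}\beta'$ implies $R^*(\alpha')\to^\mathcal{T}R^*(\beta')$; (iii) for every $\alpha\in\mathcal{A}[\mathcal{T}]$ there is $\Pi\subset\mathcal{A}[\mathcal{S}]$ with $R^*=\alpha$ on $\Pi$ such that for every producible $\beta$ with $\alpha\to^\mathcal{T}\beta$: each $\alpha'\in\Pi$ produces some $\beta'$ with $R^*(\beta')=\beta$, and whenever producible $\alpha''\to^\mathcal{S}\beta'$ with $R^*(\alpha'')=\alpha$, $R^*(\beta')=\beta$, some $\alpha'\in\Pi$ produces $\alpha''$. *)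

(* Defs.v *)
From Stdlib Require Import ZArith List String Ascii Arith Cantor.
Import ListNotations.
Open Scope Z_scope.

Definition glue : Type := (string * nat)%type.

Record tile : Type := Tile { west : glue ; east : glue }.

Definition glue_eq_dec : forall g h : glue, {g = h} + {g <> h}.
Proof. decide equality; [apply Nat.eq_dec | apply string_dec]. Defined.

Definition tile_eq_dec : forall s t : tile, {s = t} + {s <> t}.
Proof. decide equality; apply glue_eq_dec. Defined.

Definition tileset : Type := list tile.

Definition asm : Type := Z -> option tile.

Definition is_assembly (a : asm) : Prop :=
  (exists x, a x <> None) /\
  (forall x y z, x <= y <= z -> a x <> None -> a z <> None -> a y <> None).

Definition over (T : tileset) (a : asm) : Prop :=
  forall x t, a x = Some t -> In t T.

Definition aeq (a b : asm) : Prop := forall x, a x = b x.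

(** Interaction strength between a left tile [l] and a right tile [r]:
    the strength of the east glue of [l] if it equals the west glue of [r]
    (a strength-0 match is no interaction, which also gives 0). *)
Definition istrength (l r : tile) : nat :=
  if glue_eq_dec (east l) (west r) then snd (east l) else 0%nat.

Definition stable (tau : nat) (a : asm) : Prop :=
  forall x l r, a x = Some l -> a (x + 1) = Some r -> (tau <= istrength l r)%nat.

(** Finite assemblies given as lists of (position, tile); first entry wins. *)
Definition fasm : Type := list (Z * tile).

Fixpoint fasm_fun (l : fasm) (x : Z) : option tile :=
  match l with
  | [] => None
  | (p, t) :: l' => if Z.eq_dec p x then Some t else fasm_fun l' x
  end.

Record system : Type := Sys { tiles : tileset ; seed : fasm ; temp : nat }.

Definition valid_system (Y : system) : Prop :=
  (1 <= temp Y)%nat /\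
  is_assembly (fasm_fun (seed Y)) /\
  over (tiles Y) (fasm_fun (seed Y)) /\
  stable (temp Y) (fasm_fun (seed Y)).

Definition step (Y : system) (a b : asm) : Prop :=
  exists p t, In t (tiles Y) /\ a p = None /\ b p = Some t /\
    (forall q, q <> p -> b q = a q) /\
    is_assembly b /\ stable (temp Y) b.

(** [a] produces [b] in S: there is a finite or infinite assembly sequence
    starting at [a] (modelled as an infinite sequence in which each step
    is either a single tile addition or a stutter) whose result (limit) is [b]. *)
Definition produces (Y : system) (a b : asm) : Prop :=
  exists f : nat -> asm,
    aeq (f 0%nat) a /\
    (forall i, aeq (f (S i)) (f i) \/ step Y (f i) (f (S i))) /\
    (forall x t, b x = Some t <-> exists i, f i x = Some t).

Definition producible (Y : system) (a : asm) : Prop :=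
  produces Y (fasm_fun (seed Y)) a.

Definition terminal (Y : system) (a : asm) : Prop :=
  producible Y a /\ ~ exists b, step Y a b.

Definition block : Type := list (option tile).

Definition block_over (U : tileset) (m : nat) (b : block) : Prop :=
  List.length b = m /\ forall t, In (Some t) b -> In t U.

Definition blk (m : nat) (a : asm) (x : Z) : block :=
  map (fun i => a (Z.of_nat m * x + Z.of_nat i)) (seq 0 m).

Definition block_le (b c : block) : Prop :=
  List.length b = List.length c /\
  forall i t, nth_error b i = Some (Some t) -> nth_error c i = Some (Some t).

Definition repfun : Type := block -> option tile.

Definition valid_rep (U T : tileset) (m : nat) (R : repfun) : Prop :=
  (forall b t, block_over U m b -> R b = Some t -> In t T) /\
  (forall b c t, block_over U m b -> block_over U m c -> block_le b c ->
     R b = Some t -> R c = Some t).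

Definition Rstar (m : nat) (R : repfun) (a : asm) : asm :=
  fun x => R (blk m a x).

Definition nonempty_block (m : nat) (a : asm) (x : Z) : Prop :=
  exists i, (i < m)%nat /\ a (Z.of_nat m * x + Z.of_nat i) <> None.

Definition maps_cleanly (m : nat) (R : repfun) (a : asm) : Prop :=
  (forall x, nonempty_block m a x ->
     exists y, Z.abs (y - x) <= 1 /\ Rstar m R a y <> None) \/
  (forall x y, nonempty_block m a x -> nonempty_block m a y -> x = y).

Definition simulates (Ssim T : system) (m : nat) (R : repfun) : Prop :=
  valid_rep (tiles Ssim) (tiles T) m R /\
  (forall a', producible Ssim a' -> producible T (Rstar m R a')) /\
  (forall a, producible T a -> exists a', producible Ssim a' /\ aeq (Rstar m R a') a) /\
  (forall a', terminal Ssim a' -> terminal T (Rstar m R a')) /\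
  (forall a, terminal T a -> exists a', terminal Ssim a' /\ aeq (Rstar m R a') a) /\
  (forall a', producible Ssim a' -> maps_cleanly m R a') /\
  (forall a' b', producible Ssim a' -> produces Ssim a' b' ->
     produces T (Rstar m R a') (Rstar m R b')) /\
  (forall a, producible T a ->
     exists Pi : asm -> Prop,
       (forall a', Pi a' -> producible Ssim a') /\
       (forall a', Pi a' -> aeq (Rstar m R a') a) /\
       (forall b, producible T b -> produces T a b ->
          (forall a', Pi a' -> exists b', produces Ssim a' b' /\ aeq (Rstar m R b') b) /\
          (forall a'' b', producible Ssim a'' -> produces Ssim a'' b' ->
             aeq (Rstar m R a'') a -> aeq (Rstar m R b') b ->
             exists a', Pi a' /\ produces Ssim a' a''))).

Definition reptable : Type := list (block * tile).

Definition opt_tile_eq_dec : forall a b : option tile, {a = b} + {a <> b}.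
Proof. decide equality; apply tile_eq_dec. Defined.

Definition block_eq_dec : forall b c : block, {b = c} + {b <> c}.
Proof. apply list_eq_dec, opt_tile_eq_dec. Defined.

Fixpoint table_fun (tb : reptable) (b : block) : option tile :=
  match tb with
  | [] => None
  | (k, t) :: tb' => if block_eq_dec k b then Some t else table_fun tb' b
  end.

Definition pair (a b : nat) : nat := Cantor.to_nat (a, b).

(** Partial recursive functions nat -/-> nat, in the unary formulation with
    Cantor pairing (zero, successor, identity, projections, composition,
    pairing, primitive recursion, unbounded minimisation). *)
Inductive prf : Type :=
| PZero | PSucc | PId | PFst | PSnd
| PComp (f g : prf)
| PPair (f g : prf)
| PRec (f g : prf)
| PMu (f : prf).

Inductive evalp : prf -> nat -> nat -> Prop :=
| ev_zero x : evalp PZero x 0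
| ev_succ x : evalp PSucc x (S x)
| ev_id x : evalp PId x x
| ev_fst a b : evalp PFst (pair a b) a
| ev_snd a b : evalp PSnd (pair a b) b
| ev_comp f g x y z : evalp g x y -> evalp f y z -> evalp (PComp f g) x z
| ev_pair f g x a b : evalp f x a -> evalp g x b -> evalp (PPair f g) x (pair a b)
| ev_rec0 f g x y : evalp f x y -> evalp (PRec f g) (pair x 0) y
| ev_recS f g x n y z : evalp (PRec f g) (pair x n) y ->
    evalp g (pair (pair x n) y) z -> evalp (PRec f g) (pair x (S n)) z
| ev_mu f x n : evalp f (pair x n) 0 ->
    (forall k, (k < n)%nat -> exists v, v <> 0%nat /\ evalp f (pair x k) v) ->
    evalp (PMu f) x n.

Definition computable {A B : Type} (eA : A -> nat) (eB : B -> nat) (f : A -> B) : Prop :=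
  exists c : prf, forall a, evalp c (eA a) (eB (f a)).

Fixpoint enc_list {A : Type} (e : A -> nat) (l : list A) : nat :=
  match l with
  | [] => 0
  | x :: l' => S (pair (e x) (enc_list e l'))
  end.

Fixpoint enc_string (s : string) : nat :=
  match s with
  | EmptyString => 0
  | String c s' => S (pair (nat_of_ascii c) (enc_string s'))
  end.

Definition enc_Z (z : Z) : nat :=
  if Z_le_dec 0 z then (2 * Z.to_nat z)%nat else (2 * Z.to_nat (- z) - 1)%nat.

Definition enc_glue (g : glue) : nat := pair (enc_string (fst g)) (snd g).

Definition enc_tile (t : tile) : nat := pair (enc_glue (west t)) (enc_glue (east t)).

Definition enc_opt_tile (o : option tile) : nat :=
  match o with None => 0 | Some t => S (enc_tile t) end.

Definition enc_fasm (l : fasm) : nat :=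
  enc_list (fun pt => pair (enc_Z (fst pt)) (enc_tile (snd pt))) l.

Definition enc_system (Y : system) : nat :=
  pair (enc_list enc_tile (tiles Y)) (pair (enc_fasm (seed Y)) (temp Y)).

Definition enc_reptable (tb : reptable) : nat :=
  enc_list (fun bt => pair (enc_list enc_opt_tile (fst bt)) (enc_tile (snd bt))) tb.

(* Main.v *)
Require Import Defs.
From Stdlib Require Import ZArith List String Lia Classical.
Import ListNotations.
Open Scope Z_scope.

Definition sub (a b : asm) : Prop := forall x t, a x = Some t -> b x = Some t.

Definition wb (sg : asm) (s0 : Z) (i : nat) (x : Z) : bool :=
  match sg x with Some _ => true | None => false end ||
  ((s0 - (Z.of_nat i + 1) / 2 <=? x) && (x <=? s0 + Z.of_nat i / 2)).

Lemma wb_mono sg s0 i x : wb sg s0 i x = true -> wb sg s0 (S i) x = true.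
Proof.
  unfold wb. intro W. apply Bool.orb_true_iff in W. apply Bool.orb_true_iff.
  destruct W as [W|W]; [left; exact W|right].
  apply Bool.andb_true_iff in W; destruct W as [W1 W2].
  apply Z.leb_le in W1; apply Z.leb_le in W2.
  assert (H : (Z.of_nat (S i) + 1) / 2 >= (Z.of_nat i + 1)/2 /\ Z.of_nat (S i) / 2 >= Z.of_nat i / 2)
    by (rewrite Nat2Z.inj_succ; Z.div_mod_to_equations; lia).
  apply Bool.andb_true_iff; split; apply Z.leb_le; lia.
Qed.

Lemma ext_producible (Y : system) (b : asm) :
  is_assembly (fasm_fun (seed Y)) -> over (tiles Y) b -> stable (temp Y) b ->
  is_assembly b -> sub (fasm_fun (seed Y)) b -> producible Y b.
Proof.
  set (sg := fasm_fun (seed Y)).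
  intros [[s0 Hs0] Hsc] Hov Hst [_ Hbc] Hsub.
  set (f := fun (i : nat) (x : Z) => if wb sg s0 i x then b x else None).
  assert (Hf : forall i x t, f i x = Some t -> b x = Some t).
  { unfold f; intros i x t; destruct (wb sg s0 i x); congruence. }
  assert (Hb0 : b s0 <> None).
  { destruct (sg s0) eqn:E; [|congruence]. rewrite (Hsub _ _ E); congruence. }
  assert (Hasm : forall i, is_assembly (f i)).
  { intro i; split.
    - exists s0. unfold f, wb. destruct (sg s0); [simpl; auto| congruence].
    - intros x y z Hxyz Hx Hz. unfold f in *.
      destruct (wb sg s0 i x) eqn:Wx; [|congruence].
      destruct (wb sg s0 i z) eqn:Wz; [|congruence].
      assert (Wy : wb sg s0 i y = true).
      { unfold wb in *. apply Bool.orb_true_iff in Wx, Wz.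
        destruct (Z_le_dec s0 y).
        - destruct Wz as [Wz|Wz].
          + destruct (sg z) eqn:Ez; [|discriminate].
            assert (sg y <> None) by (apply (Hsc s0 y z); [lia|auto|congruence]).
            destruct (sg y); [reflexivity|congruence].
          + apply Bool.andb_true_iff in Wz; destruct Wz as [W1 W2].
            apply Z.leb_le in W1; apply Z.leb_le in W2.
            apply Bool.orb_true_iff; right; apply Bool.andb_true_iff; split; apply Z.leb_le.
            * assert (0 <= (Z.of_nat i + 1)/2) by (apply Z.div_pos; lia). lia.
            * lia.
        - destruct Wx as [Wx|Wx].
          + destruct (sg x) eqn:Ex; [|discriminate].
            assert (sg y <> None) by (apply (Hsc x y s0); [lia|congruence|auto]).
            destruct (sg y); [reflexivity|congruence].
          + apply Bool.andb_true_iff in Wx; destruct Wx as [W1 W2].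
            apply Z.leb_le in W1; apply Z.leb_le in W2.
            apply Bool.orb_true_iff; right; apply Bool.andb_true_iff; split; apply Z.leb_le.
            * lia.
            * assert (0 <= Z.of_nat i/2) by (apply Z.div_pos; lia). lia. }
      rewrite Wy. apply (Hbc x y z); auto. }
  assert (Hstab : forall i, stable (temp Y) (f i)).
  { intros i x l r Hl Hr. apply (Hst x); eauto. }
  exists f; split; [|split].
  - intro x. unfold f. destruct (sg x) eqn:E.
    + unfold wb. rewrite E. simpl. fold sg. rewrite E. apply Hsub. exact E.
    + assert (W0: ((s0 - (Z.of_nat 0 + 1) / 2 <=? x) && (x <=? s0 + Z.of_nat 0 / 2))%bool = false).
      { change (Z.of_nat 0) with 0. change ((0+1)/2) with 0. change (0/2) with 0.
        destruct (Z.eq_dec x s0); [subst; congruence|].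
        destruct (Z.leb_spec (s0 - 0) x); destruct (Z.leb_spec x (s0 + 0)); simpl; auto; lia. }
      unfold wb. rewrite E, W0. simpl. fold sg. rewrite E. reflexivity.
  - intro i.
    assert (Hwin : exists p, forall x, x <> p -> wb sg s0 (S i) x = wb sg s0 i x).
    { assert (H : ((Z.of_nat i+1+1)/2 = (Z.of_nat i+1)/2 /\ (Z.of_nat i+1)/2 = Z.of_nat i/2 + 1) \/
                  ((Z.of_nat i+1+1)/2 = (Z.of_nat i+1)/2 + 1 /\ (Z.of_nat i+1)/2 = Z.of_nat i/2))
        by (Z.div_mod_to_equations; lia).
      unfold wb. rewrite Nat2Z.inj_succ. unfold Z.succ.
      destruct H as [[H1 H2]|[H1 H2]]; rewrite H1, H2.
      - exists (s0 + Z.of_nat i / 2 + 1). intros x Hx.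
        f_equal. destruct (s0 - _ <=? x); simpl; auto.
        destruct (Z.leb_spec x (s0 + (Z.of_nat i / 2 + 1))); destruct (Z.leb_spec x (s0 + Z.of_nat i / 2)); auto; lia.
      - exists (s0 - (Z.of_nat i / 2 + 1)). intros x Hx.
        f_equal. f_equal.
        destruct (Z.leb_spec (s0 - (Z.of_nat i / 2 + 1)) x); destruct (Z.leb_spec (s0 - Z.of_nat i / 2) x); auto; lia. }
    destruct Hwin as [p Hp].
    destruct (wb sg s0 i p) eqn:Wi.
    + left. intro x. unfold f. destruct (Z.eq_dec x p).
      * subst. rewrite Wi, (wb_mono _ _ _ _ Wi). reflexivity.
      * rewrite Hp; auto.
    + destruct (b p) eqn:Bp.
      2:{ left. intro x. unfold f. destruct (Z.eq_dec x p).
          - subst. rewrite Wi, Bp. destruct (wb sg s0 (S i) p); auto.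
          - rewrite Hp; auto. }
      destruct (wb sg s0 (S i) p) eqn:Wi'.
      2:{ left. intro x. unfold f. destruct (Z.eq_dec x p).
          - subst. rewrite Wi, Wi'. auto.
          - rewrite Hp; auto. }
      right. exists p, t. split; [|split; [|split; [|split; [|split]]]].
      * apply (Hov p). exact Bp.
      * unfold f. rewrite Wi. auto.
      * unfold f. rewrite Wi'. auto.
      * intros q Hq. unfold f. rewrite Hp; auto.
      * apply Hasm.
      * apply Hstab.
  - intros x t; split.
    + intro H. exists (2 * Z.to_nat (Z.abs (x - s0)))%nat. unfold f.
      replace (wb sg s0 (2 * Z.to_nat (Z.abs (x - s0))) x) with true; auto.
      symmetry. unfold wb. apply Bool.orb_true_iff; right; apply Bool.andb_true_iff.
      rewrite Nat2Z.inj_mul, Z2Nat.id by lia.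
      split; apply Z.leb_le; Z.div_mod_to_equations; lia.
    + intros [i Hi]. eauto.
Qed.

Definition good (Y : system) (c : asm) : Prop :=
  over (tiles Y) c /\ stable (temp Y) c /\ is_assembly c.

Lemma good_aeq Y c d : aeq c d -> good Y c -> good Y d.
Proof.
  intros E [Ho [Hs [[x Hx] Hc]]]. split; [|split; [|split]].
  - intros x' t H. rewrite <- E in H. eauto.
  - intros x' l r H1 H2. rewrite <- E in H1, H2. eauto.
  - exists x. rewrite <- E. auto.
  - intros x1 y z H H1 H2. rewrite <- E in *. eauto.
Qed.

Lemma produces_props Y c a : good Y c -> produces Y c a -> good Y a /\ sub c a.
Proof.
  intros Gc [f [H0 [Hst Hlim]]].
  assert (Mono1 : forall i x t, f i x = Some t -> f (S i) x = Some t).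
  { intros i x t H. destruct (Hst i) as [E|[p [t' [_ [Hp [_ [Ho _]]]]]]].
    - rewrite E; auto.
    - destruct (Z.eq_dec x p); [subst; congruence|]. rewrite Ho; auto. }
  assert (Mono : forall i j x t, (i <= j)%nat -> f i x = Some t -> f j x = Some t).
  { intros i j x t Hij. induction Hij; auto. }
  assert (G : forall i, good Y (f i)).
  { induction i.
    - apply (good_aeq Y c); [intro x; symmetry; apply H0|exact Gc].
    - destruct (Hst i) as [E|[p [t' [Ht [Hp [Hp' [Ho [Ha Hs]]]]]]]].
      + apply (good_aeq Y (f i)); [intro x; symmetry; apply E|exact IHi].
      + split; [|split; auto].
        intros x t H. destruct (Z.eq_dec x p).
        * subst. congruence.
        * rewrite Ho in H; auto. apply (proj1 IHi x); auto. }
  split; [split; [|split; [|split]]|].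
  - intros x t H. apply Hlim in H. destruct H as [i Hi]. apply (proj1 (G i) x); auto.
  - intros x l r H1 H2. apply Hlim in H1, H2. destruct H1 as [i Hi]. destruct H2 as [j Hj].
    apply (proj1 (proj2 (G (Nat.max i j))) x).
    + apply (Mono i); auto; lia.
    + apply (Mono j); auto; lia.
  - destruct Gc as [_ [_ [[x Hx] _]]]. exists x.
    destruct (c x) eqn:E; [|congruence].
    assert (a x = Some t) by (apply Hlim; exists 0%nat; rewrite H0; auto). congruence.
  - intros x y z Hxyz Hx Hz.
    destruct (a x) eqn:Ex; [|congruence]. destruct (a z) eqn:Ez; [|congruence].
    apply Hlim in Ex, Ez. destruct Ex as [i Hi]. destruct Ez as [j Hj].
    destruct (proj2 (proj2 (G (Nat.max i j)))) as [_ Hc].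
    assert (f (Nat.max i j) y <> None).
    { apply (Hc x y z); auto.
      - rewrite (Mono i _ _ t); [congruence|lia|auto].
      - rewrite (Mono j _ _ t0); [congruence|lia|auto]. }
    destruct (f (Nat.max i j) y) eqn:Ey; [|congruence].
    assert (a y = Some t1) by (apply Hlim; eauto). congruence.
  - intros x t H. apply Hlim. exists 0%nat. rewrite H0. auto.
Qed.

Lemma valid_good Y : valid_system Y -> good Y (fasm_fun (seed Y)).
Proof. intros [_ [A [B C]]]. split; auto. Qed.

Lemma producible_props Y a : valid_system Y -> producible Y a ->
  good Y a /\ sub (fasm_fun (seed Y)) a.
Proof. intros V P. apply produces_props; auto. apply valid_good; auto. Qed.

Lemma mod_succ u d : 0 < d ->
  (u mod d + 1 < d /\ (u + 1) mod d = u mod d + 1) \/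
  (u mod d = d - 1 /\ (u + 1) mod d = 0).
Proof.
  intro Hd. pose proof (Z.div_mod u d ltac:(lia)) as E.
  pose proof (Z.mod_pos_bound u d Hd) as B.
  destruct (Z_lt_dec (u mod d + 1) d).
  - left. split; auto. symmetry. apply (Z.mod_unique _ _ (u / d)); lia.
  - right. split; [lia|]. symmetry. apply (Z.mod_unique _ _ (u / d + 1)); [lia|].
    rewrite Z.mul_add_distr_l. lia.
Qed.

Lemma pump_right (V : tileset) (tau : nat) (sg a : asm) (s0 y1 y2 : Z) :
  is_assembly sg -> sg s0 <> None -> over V a -> stable tau a -> is_assembly a ->
  sub sg a -> s0 < y1 < y2 -> sg y1 = None -> a y1 <> None -> a y1 = a y2 ->
  exists b, over V b /\ stable tau b /\ is_assembly b /\ sub sg b /\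
            (forall x, y2 < x -> b x <> None).
Proof.
  intros [_ Hsc] Hs0 Hov Hst [_ Hac] Hsub Hy Hsy1 Ha1 Ha12.
  set (d := y2 - y1).
  set (b := fun x => if Z.leb x y2 then a x else a (y1 + 1 + (x - y2 - 1) mod d)).
  assert (Hd : 0 < d) by (unfold d; lia).
  assert (Hin : forall z, y1 <= z <= y2 -> a z <> None).
  { intros z Hz. apply (Hac y1 z y2); auto; congruence. }
  assert (Hfar : forall x, y2 < x -> b x = a (y1 + 1 + (x - y2 - 1) mod d)).
  { intros x Hx. unfold b. destruct (Z.leb_spec x y2); [lia|auto]. }
  assert (Hnear : forall x, x <= y2 -> b x = a x).
  { intros x Hx. unfold b. destruct (Z.leb_spec x y2); [auto|lia]. }
  assert (Hfar' : forall x, y2 < x -> b x <> None).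
  { intros x Hx. rewrite Hfar; auto. apply Hin.
    pose proof (Z.mod_pos_bound (x - y2 - 1) d Hd). unfold d in *; lia. }
  exists b. split; [|split; [|split; [|split]]]; auto.
  - intros x t. unfold b. destruct (x <=? y2); eauto.
  - intros x l r Hl Hr.
    destruct (Z_le_dec (x + 1) y2).
    + rewrite Hnear in Hl, Hr by lia. eauto.
    + destruct (Z.eq_dec x y2).
      * subst x. rewrite Hnear in Hl by lia. rewrite Hfar in Hr by lia.
        replace (y2 + 1 - y2 - 1) with 0 in Hr by lia. rewrite Z.mod_0_l in Hr by lia.
        rewrite <- Ha12 in Hl. replace (y1 + 1 + 0) with (y1 + 1) in Hr by lia. eauto.
      * rewrite Hfar in Hl by lia. rewrite Hfar in Hr by lia.
        replace (x + 1 - y2 - 1) with ((x - y2 - 1) + 1) in Hr by lia.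
        destruct (mod_succ (x - y2 - 1) d Hd) as [[H1 H2]|[H1 H2]]; rewrite H2 in Hr.
        -- replace (y1 + 1 + ((x - y2 - 1) mod d + 1)) with ((y1 + 1 + (x - y2 - 1) mod d) + 1) in Hr by lia.
           eauto.
        -- rewrite H1 in Hl. replace (y1 + 1 + (d - 1)) with y2 in Hl by (unfold d; lia).
           rewrite <- Ha12 in Hl. replace (y1 + 1 + 0) with (y1 + 1) in Hr by lia. eauto.
  - split.
    + exists (y2 + 1). apply Hfar'. lia.
    + intros x y z Hxyz Hx Hz.
      destruct (Z_le_dec y y2).
      * rewrite Hnear by lia. rewrite Hnear in Hx by lia.
        destruct (Z_le_dec z y2).
        -- rewrite Hnear in Hz by lia. eauto.
        -- apply (Hac x y y2); auto; [lia|apply Hin; lia].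
      * apply Hfar'; lia.
  - intros x t Hx.
    assert (x <= y2).
    { destruct (Z_le_dec x y2); auto. exfalso.
      apply (Hsc s0 y1 x); auto; [lia|congruence]. }
    rewrite Hnear; auto.
Qed.

Definition flip (t : tile) : tile := Tile (east t) (west t).
Definition mir (c : asm) : asm := fun x => option_map flip (c (- x)).

Lemma flip_flip t : flip (flip t) = t.
Proof. destruct t; reflexivity. Qed.

Lemma mir_mir c x : mir (mir c) x = c x.
Proof. unfold mir. rewrite Z.opp_involutive. destruct (c x); simpl; auto. rewrite flip_flip; auto. Qed.

Lemma mir_some c x t : mir c x = Some t -> c (- x) = Some (flip t).
Proof. unfold mir. destruct (c (-x)); simpl; intro H; inversion H; subst. rewrite flip_flip; auto. Qed.

Lemma mir_none c x : mir c x = None <-> c (- x) = None.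
Proof. unfold mir. destruct (c (-x)); simpl; split; congruence. Qed.
Lemma mir_none1 c x : mir c x = None -> c (- x) = None.
Proof. apply mir_none. Qed.
Lemma mir_none2 c x : c (- x) = None -> mir c x = None.
Proof. apply mir_none. Qed.

Lemma over_mir V c : over (map flip V) c -> over V (mir c).
Proof.
  intros H x t Hx. apply mir_some in Hx. apply H in Hx. apply in_map_iff in Hx.
  destruct Hx as [u [E Hu]]. rewrite <- (flip_flip t), <- E, flip_flip. auto.
Qed.

Lemma over_mir' V c : over V c -> over (map flip V) (mir c).
Proof.
  intros H x t Hx. apply mir_some in Hx. apply H in Hx. rewrite <- (flip_flip t). apply in_map; auto.
Qed.

Lemma stable_mir tau c : stable tau c -> stable tau (mir c).
Proof.
  intros H x l r Hl Hr. apply mir_some in Hl, Hr.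
  replace (- (x + 1)) with (- x - 1) in Hr by lia.
  specialize (H (- x - 1) (flip r) (flip l) Hr). replace (- x - 1 + 1) with (- x) in H by lia.
  specialize (H Hl). unfold istrength in *. destruct l as [wl el], r as [wr er]; simpl in *.
  destruct (glue_eq_dec el wr); destruct (glue_eq_dec wr el); subst; auto; congruence.

Qed.

Lemma asm_mir c : is_assembly c -> is_assembly (mir c).
Proof.
  intros [[x Hx] Hc]. split.
  - exists (- x). unfold mir. rewrite Z.opp_involutive. destruct (c x); simpl; congruence.
  - intros x1 y z Hxyz H1 H2 H3. apply mir_none1 in H3.
    apply (Hc (- z) (- y) (- x1)); [lia|intro E; apply H2; apply mir_none2; auto|intro E; apply H1; apply mir_none2; auto|auto].
Qed.

Lemma sub_mir c d : sub c d -> sub (mir c) (mir d).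
Proof. intros H x t Hx. unfold mir in *. destruct (c (-x)) eqn:E; [|discriminate]. rewrite (H _ _ E). auto. Qed.

Lemma pump_left (V : tileset) (tau : nat) (sg a : asm) (s0 y1 y2 : Z) :
  is_assembly sg -> sg s0 <> None -> over V a -> stable tau a -> is_assembly a ->
  sub sg a -> y1 < y2 < s0 -> sg y2 = None -> a y2 <> None -> a y1 = a y2 ->
  exists b, over V b /\ stable tau b /\ is_assembly b /\ sub sg b /\
            (forall x, x < y1 -> b x <> None).
Proof.
  intros Hsa Hs0 Hov Hst Ha Hsub Hy Hsy Hay Ha12.
  destruct (pump_right (map flip V) tau (mir sg) (mir a) (- s0) (- y2) (- y1)) as [b [B1 [B2 [B3 [B4 B5]]]]].
  - apply asm_mir; auto.
  - intro H. apply mir_none1 in H. rewrite Z.opp_involutive in H. auto.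
  - apply over_mir'; auto.
  - apply stable_mir; auto.
  - apply asm_mir; auto.
  - apply sub_mir; auto.
  - lia.
  - apply mir_none2. rewrite Z.opp_involutive. auto.
  - intro H. apply mir_none1 in H. rewrite Z.opp_involutive in H. auto.
  - unfold mir. rewrite !Z.opp_involutive. congruence.
  - exists (mir b). split; [|split; [|split; [|split]]].
    + apply over_mir; auto.
    + apply stable_mir; auto.
    + apply asm_mir; auto.
    + intros x t Hx. assert (E : mir sg (- x) = Some (flip t)) by (unfold mir; rewrite Z.opp_involutive, Hx; reflexivity).
      apply B4 in E. unfold mir. rewrite E. simpl. rewrite flip_flip. auto.
    + intros x Hx H. apply mir_none1 in H. apply (B5 (- x)); auto. lia.
Qed.

Definition tl (k : nat) : tile := Tile ("a"%string, k) ("a"%string, S k).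
Definition Tsys (n : nat) : system := Sys (map tl (seq 0 (S n))) [(0, tl 0)] 1.
Definition Cn (n : nat) (x : Z) : option tile :=
  if ((0 <=? x) && (x <=? Z.of_nat n))%bool then Some (tl (Z.to_nat x)) else None.

Lemma in_T n t : In t (tiles (Tsys n)) -> exists j, t = tl j /\ (j <= n)%nat.
Proof. unfold Tsys, tiles. intro H. apply in_map_iff in H. destruct H as [j [E H]]. apply in_seq in H. exists j; split; auto; lia. Qed.

Lemma seedT n x : fasm_fun (seed (Tsys n)) x = if Z.eq_dec 0 x then Some (tl 0) else None.
Proof. reflexivity. Qed.

Lemma istr k j : (1 <= istrength (tl k) (tl j))%nat -> j = S k.
Proof. unfold istrength. intro H. destruct (glue_eq_dec (east (tl k)) (west (tl j))) as [E|E]; [unfold tl in E; simpl in E; inversion E; auto|lia]. Qed.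

Lemma T_valid n : valid_system (Tsys n).
Proof.
  split; [simpl; lia|split; [|split]].
  - split.
    + exists 0. rewrite seedT. destruct (Z.eq_dec 0 0); congruence.
    + intros x y z H H1 H2. rewrite seedT in *. destruct (Z.eq_dec 0 x); destruct (Z.eq_dec 0 z); try congruence.
      destruct (Z.eq_dec 0 y); [congruence|lia].
  - intros x t H. rewrite seedT in H. destruct (Z.eq_dec 0 x); inversion H. simpl. left; auto.
  - intros x l r H1 H2. rewrite seedT in *. destruct (Z.eq_dec 0 x); destruct (Z.eq_dec 0 (x+1)); try congruence; lia.
Qed.

Definition J (n : nat) (c : asm) : Prop :=
  (forall x t, c x = Some t -> 0 <= x <= Z.of_nat n /\ t = tl (Z.to_nat x)) /\ c 0 <> None.

Lemma J_step n a b : J n a -> step (Tsys n) a b -> J n b.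
Proof.
  intros [Ja Ja0] [p [t [Ht [Hp [Hbp [Ho [[_ Hbc] Hst]]]]]]].
  assert (Hp0 : p <> 0) by (intro; subst; congruence).
  assert (Hb0 : b 0 <> None) by (rewrite Ho; auto).
  apply in_T in Ht. destruct Ht as [j [Et Hj]]. subst t.
  assert (Key : p = Z.of_nat j).
  { destruct (Z_lt_dec 0 p).
    - assert (b (p - 1) <> None) by (apply (Hbc 0 (p-1) p); [lia|auto|congruence]).
      destruct (b (p-1)) eqn:E; [|congruence].
      pose proof E as E'. rewrite Ho in E' by lia. apply Ja in E'. destruct E' as [B1 B2]. subst t.
      specialize (Hst (p-1) _ (tl j) E). replace (p - 1 + 1) with p in Hst by lia.
      apply Hst in Hbp. simpl in Hbp. apply istr in Hbp. lia.
    - assert (b (p + 1) <> None) by (apply (Hbc p (p+1) 0); [lia|congruence|auto]).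
      destruct (b (p+1)) eqn:E; [|congruence].
      pose proof E as E'. rewrite Ho in E' by lia. apply Ja in E'. destruct E' as [B1 B2]. subst t.
      specialize (Hst p _ _ Hbp E). simpl in Hst. apply istr in Hst. lia. }
  split; auto.
  intros x t Hx. destruct (Z.eq_dec x p).
  - subst. rewrite Hbp in Hx. inversion Hx. rewrite Nat2Z.id. split; auto; lia.
  - rewrite Ho in Hx; auto.
Qed.

Lemma T_prod_bound n a : producible (Tsys n) a -> forall x t, a x = Some t -> 0 <= x <= Z.of_nat n.
Proof.
  intros [f [H0 [Hst Hlim]]].
  assert (G : forall i, J n (f i)).
  { induction i.
    - split.
      + intros x t H. rewrite H0, seedT in H. destruct (Z.eq_dec 0 x); inversion H; subst. simpl; split; auto; lia.
      + rewrite H0. rewrite seedT. destruct (Z.eq_dec 0 0); congruence.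
    - destruct (Hst i) as [E|E].
      + destruct IHi as [A B]. split.
        * intros x t H. rewrite E in H. eauto.
        * rewrite E. auto.
      + eapply J_step; eauto. }
  intros x t H. apply Hlim in H. destruct H as [i H]. apply (G i) in H. tauto.
Qed.

Lemma C_producible n : producible (Tsys n) (Cn n).
Proof.
  apply ext_producible.
  - apply T_valid.
  - intros x t H. unfold Cn in H.
    destruct (Z.leb_spec 0 x); destruct (Z.leb_spec x (Z.of_nat n)); simpl in H; inversion H.
    unfold Tsys, tiles. apply in_map. apply in_seq. lia.
  - intros x l r H1 H2. unfold Cn in *.
    destruct (Z.leb_spec 0 x); destruct (Z.leb_spec x (Z.of_nat n)); simpl in H1; inversion H1.
    destruct (Z.leb_spec 0 (x+1)); destruct (Z.leb_spec (x+1) (Z.of_nat n)); simpl in H2; inversion H2.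
    replace (Z.to_nat (x+1)) with (S (Z.to_nat x)) by lia.
    unfold istrength. destruct (glue_eq_dec (east (tl (Z.to_nat x))) (west (tl (S (Z.to_nat x))))) as [_|E]; [unfold tl; simpl; lia|unfold tl in E; simpl in E; congruence].
  - split.
    + exists 0. unfold Cn. destruct (Z.leb_spec 0 (Z.of_nat n)); simpl; [congruence|lia].
    + intros x y z H H1 H2. unfold Cn in *.
      destruct (Z.leb_spec 0 x); destruct (Z.leb_spec x (Z.of_nat n)); simpl in H1; try congruence.
      destruct (Z.leb_spec 0 z); destruct (Z.leb_spec z (Z.of_nat n)); simpl in H2; try congruence.
      destruct (Z.leb_spec 0 y); destruct (Z.leb_spec y (Z.of_nat n)); simpl; try congruence; lia.
  - intros x t H. rewrite seedT in H. destruct (Z.eq_dec 0 x); inversion H; subst. unfold Cn. destruct (Z.leb_spec 0 (Z.of_nat n)); simpl; [reflexivity|lia].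
Qed.

Lemma seed_producible Y : producible Y (fasm_fun (seed Y)).
Proof.
  exists (fun _ => fasm_fun (seed Y)). split; [intro; auto|split].
  - intro i. left. intro; auto.
  - intros x t; split; [intro H; exists 0%nat; auto|intros [_ H]; auto].
Qed.

Lemma blk_over U m a x : over U a -> block_over U m (blk m a x).
Proof.
  intro H. unfold blk. split.
  - rewrite length_map, length_seq. auto.
  - intros t Ht. apply in_map_iff in Ht. destruct Ht as [i [E _]]. eauto.
Qed.

Lemma blk_le m a b x : sub a b -> block_le (blk m a x) (blk m b x).
Proof.
  intro H. unfold blk. split.
  - rewrite !length_map. auto.
  - intros i t Hi. rewrite nth_error_map in *. destruct (nth_error (seq 0 m) i); simpl in *; [|discriminate].
    inversion Hi. rewrite (H _ _ H1). auto.
Qed.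

Lemma blk_diff m a b x : blk m a x <> blk m b x ->
  exists i, (i < m)%nat /\ a (Z.of_nat m * x + Z.of_nat i) <> b (Z.of_nat m * x + Z.of_nat i).
Proof.
  intro H. apply NNPP. intro H'. apply H. unfold blk. apply map_ext_in. intros i Hi.
  apply in_seq in Hi. apply NNPP. intro E. apply H'. exists i. split; [lia|auto].
Qed.

Definition dflt : tile := Tile (""%string, 0%nat) (""%string, 0%nat).

Lemma pigeon (U : tileset) (a : asm) y1 y2 : over U a ->
  (forall z, y1 <= z <= y2 -> a z <> None) ->
  (forall z1 z2, y1 <= z1 -> z1 < z2 -> z2 <= y2 -> a z1 = a z2 -> False) ->
  y1 <= y2 -> y2 - y1 < Z.of_nat (List.length U).
Proof.
  intros Ho Hn Hd Hy. destruct (Z_lt_dec (y2 - y1) (Z.of_nat (List.length U))) as [|Hc]; auto. exfalso.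
  set (N := List.length U).
  set (g := fun k : nat => match a (y1 + Z.of_nat k) with Some t => t | None => dflt end).
  assert (Hg : forall k, (k <= N)%nat -> a (y1 + Z.of_nat k) = Some (g k)).
  { intros k Hk. unfold g. destruct (a (y1 + Z.of_nat k)) eqn:E; auto. exfalso. apply (Hn (y1 + Z.of_nat k)); auto; lia. }
  assert (ND : NoDup (map g (seq 0 (S N)))).
  { apply NoDup_map_NoDup_ForallPairs; [|apply seq_NoDup].
    intros k1 k2 H1 H2 E. apply in_seq in H1, H2.
    destruct (Nat.lt_total k1 k2) as [L|[L|L]]; auto; exfalso.
    - apply (Hd (y1 + Z.of_nat k1) (y1 + Z.of_nat k2)); [lia|lia|lia|]. rewrite !Hg by lia. congruence.
    - apply (Hd (y1 + Z.of_nat k2) (y1 + Z.of_nat k1)); [lia|lia|lia|]. rewrite !Hg by lia. congruence. }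
  assert (IN : incl (map g (seq 0 (S N))) U).
  { intros t Ht. apply in_map_iff in Ht. destruct Ht as [k [E Hk]]. apply in_seq in Hk.
    subst t. apply (Ho (y1 + Z.of_nat k)). apply Hg. lia. }
  pose proof (NoDup_incl_length ND IN). rewrite length_map, length_seq in H. fold N in H. lia.
Qed.

Theorem mainTheorem6 :
  ~ exists (U : tileset) (tau' : nat)
           (Rf : system -> reptable) (Sf : system -> fasm),
      computable enc_system enc_reptable Rf /\
      computable enc_system enc_fasm Sf /\
      forall T : system, valid_system T ->
        valid_system (Sys U (Sf T) tau') /\
        exists m : nat, simulates (Sys U (Sf T) tau') T m (table_fun (Rf T)).
Proof.
  intros [U [tau' [Rf [Sf [_ [_ H]]]]]].
  set (N := List.length U). set (n := (2 * N + 3)%nat).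
  destruct (H (Tsys n) (T_valid n)) as [VS [m Sim]].
  set (Ssys := Sys U (Sf (Tsys n)) tau') in *.
  set (sg := fasm_fun (Sf (Tsys n))).
  set (R := table_fun (Rf (Tsys n))) in *.
  destruct Sim as [[_ Rmono] [SimP [SimP2 [_ [_ [Clean _]]]]]].
  destruct (SimP2 _ (C_producible n)) as [a [Pa Ea]].
  destruct (SimP2 _ (seed_producible (Tsys n))) as [a2 [Pa2 Ea2]].
  destruct (producible_props Ssys a VS Pa) as [[Hao [Has Haa]] Hsub].
  destruct (producible_props Ssys a2 VS Pa2) as [[Hao2 _] Hsub2].
  destruct VS as [_ [Hsa [Hso _]]].
  change (fasm_fun (seed Ssys)) with sg in *. change (tiles Ssys) with U in *. change (temp Ssys) with tau' in *.
  destruct Hsa as [[s0 Hs0] Hsc].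
  destruct m as [|m'].
  { pose proof (Ea 0) as E0. pose proof (Ea (-1)) as E1. unfold Rstar, blk in E0, E1. simpl in E0, E1.
    unfold Cn in E0, E1. simpl in E1. destruct (Z.leb_spec 0 (Z.of_nat n)); simpl in E0; [|lia]. congruence. }
  set (m := S m') in *.
  assert (HM : 1 <= Z.of_nat m) by (unfold m; lia).
  assert (S0 : forall x t, Rstar m R sg x = Some t -> x = 0).
  { intros x t Hx. unfold Rstar in Hx.
    apply (Rmono _ (blk m a2 x)) in Hx; [| apply blk_over; auto | apply blk_over; auto | apply blk_le; auto].
    pose proof (Ea2 x) as E. unfold Rstar in E. rewrite Hx, seedT in E.
    destruct (Z.eq_dec 0 x); [auto|discriminate]. }
  assert (FarR : forall b K, producible Ssys b -> (forall x, K < x -> b x <> None) -> False).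
  { intros b K Pb Hb. set (x1 := Z.abs K + Z.of_nat n + 3).
    assert (NB : forall x, x1 <= x -> nonempty_block m b x).
    { intros x Hx. exists 0%nat. split; [unfold m; lia|]. apply Hb. nia. }
    destruct (Clean b Pb) as [C|C].
    - destruct (C x1 (NB x1 ltac:(lia))) as [y [Hy Hr]].
      destruct (Rstar m R b y) eqn:E; [|congruence].
      pose proof (T_prod_bound n _ (SimP b Pb) y t E). lia.
    - specialize (C x1 (x1 + 1) (NB x1 ltac:(lia)) (NB (x1+1) ltac:(lia))). lia. }
  assert (FarL : forall b K, producible Ssys b -> (forall x, x < K -> b x <> None) -> False).
  { intros b K Pb Hb. set (x1 := - Z.abs K - 3).
    assert (NB : forall x, x <= x1 -> nonempty_block m b x).
    { intros x Hx. exists 0%nat. split; [unfold m; lia|]. apply Hb. nia. }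
    destruct (Clean b Pb) as [C|C].
    - destruct (C x1 (NB x1 ltac:(lia))) as [y [Hy Hr]].
      destruct (Rstar m R b y) eqn:E; [|congruence].
      pose proof (T_prod_bound n _ (SimP b Pb) y t E). lia.
    - specialize (C x1 (x1 - 1) (NB x1 ltac:(lia)) (NB (x1-1) ltac:(lia))). lia. }
  assert (DR : forall y1 y2, s0 < y1 -> y1 < y2 -> sg y1 = None -> a y1 <> None -> a y1 = a y2 -> False).
  { intros y1 y2 H1 H2 H3 H4 H5.
    destruct (pump_right U tau' sg a s0 y1 y2 (conj (ex_intro _ s0 Hs0) Hsc) Hs0 Hao Has Haa Hsub ltac:(lia) H3 H4 H5) as [b [B1 [B2 [B3 [B4 B5]]]]].
    apply (FarR b y2); auto. apply ext_producible; auto. split; [exists s0; auto|auto]. }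
  assert (DL : forall y1 y2, y1 < y2 -> y2 < s0 -> sg y2 = None -> a y2 <> None -> a y1 = a y2 -> False).
  { intros y1 y2 H1 H2 H3 H4 H5.
    destruct (pump_left U tau' sg a s0 y1 y2 (conj (ex_intro _ s0 Hs0) Hsc) Hs0 Hao Has Haa Hsub ltac:(lia) H3 H4 H5) as [b [B1 [B2 [B3 [B4 B5]]]]].
    apply (FarL b y1); auto. apply ext_producible; auto. split; [exists s0; auto|auto]. }
  set (ER := fun y => s0 < y /\ sg y = None /\ a y <> None).
  set (EL := fun y => y < s0 /\ sg y = None /\ a y <> None).
  assert (DiamR : forall y1 y2, ER y1 -> ER y2 -> y1 <= y2 -> y2 - y1 < Z.of_nat N).
  { intros y1 y2 [A1 [A2 A3]] [B1 [B2 B3]] Hy. apply (pigeon U a); auto.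
    - intros z Hz. apply (proj2 Haa y1 z y2); auto.
    - intros z1 z2 Z1 Z2 Z3 E. apply (DR z1 z2); auto; try lia.
      + destruct (sg z1) eqn:E1; auto. exfalso. apply (Hsc s0 y1 z1); [lia|auto|congruence|auto].
      + apply (proj2 Haa y1 z1 y2); auto; lia. }
  assert (DiamL : forall y1 y2, EL y1 -> EL y2 -> y1 <= y2 -> y2 - y1 < Z.of_nat N).
  { intros y1 y2 [A1 [A2 A3]] [B1 [B2 B3]] Hy. apply (pigeon U a); auto.
    - intros z Hz. apply (proj2 Haa y1 z y2); auto.
    - intros z1 z2 Z1 Z2 Z3 E. apply (DL z1 z2); auto; try lia.
      + destruct (sg z2) eqn:E1; auto. exfalso. apply (Hsc z2 y2 s0); [lia|congruence|auto|auto].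
      + apply (proj2 Haa y1 z2 y2); auto; lia. }
  set (M := Z.of_nat m) in *.
  assert (Pick : forall x, 0 < x <= Z.of_nat n -> exists y, M * x <= y < M * x + M /\ (ER y \/ EL y)).
  { intros x Hx. pose proof (Ea x) as E. unfold Cn in E.
    destruct (Z.leb_spec 0 x); destruct (Z.leb_spec x (Z.of_nat n)); simpl in E; try lia.
    assert (D : blk m sg x <> blk m a x).
    { intro D. destruct (Rstar m R sg x) eqn:E2.
      - apply S0 in E2. lia.
      - unfold Rstar in E, E2. rewrite D in E2. congruence. }
    apply blk_diff in D. destruct D as [i [Hi Hd]]. fold M in Hd.
    exists (M * x + Z.of_nat i). split; [unfold M, m in *; lia|].
    destruct (sg (M * x + Z.of_nat i)) eqn:E3.
    - exfalso. apply Hd. rewrite (Hsub _ _ E3). auto.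
    - assert (a (M * x + Z.of_nat i) <> None) by congruence.
      destruct (Z_lt_dec s0 (M * x + Z.of_nat i)); [left|right]; unfold ER, EL; repeat split; auto.
      destruct (Z.eq_dec (M * x + Z.of_nat i) s0); [subst; congruence|lia]. }
  assert (Close : forall xa xb ya yb, xb >= xa + Z.of_nat N + 1 -> M * xa <= ya < M * xa + M ->
                    M * xb <= yb -> (ER ya /\ ER yb) \/ (EL ya /\ EL yb) -> False).
  { intros xa xb ya yb Hx Ha Hb Hs.
    assert (Hm : M * (xb - xa - 1) >= M * Z.of_nat N) by nia.
    assert (M * Z.of_nat N >= Z.of_nat N) by nia.
    destruct Hs as [[A B]|[A B]].
    - pose proof (DiamR ya yb A B ltac:(nia)). nia.
    - pose proof (DiamL ya yb A B ltac:(nia)). nia. }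
  destruct (Pick 1 ltac:(unfold n; lia)) as [y1 [Y1 S1]].
  destruct (Pick (Z.of_nat N + 2) ltac:(unfold n; lia)) as [y2 [Y2 S2]].
  destruct (Pick (2 * Z.of_nat N + 3) ltac:(unfold n; lia)) as [y3 [Y3 S3]].
  destruct S1 as [S1|S1]; destruct S2 as [S2|S2]; destruct S3 as [S3|S3].
  - apply (Close 1 (Z.of_nat N + 2) y1 y2); auto; lia.
  - apply (Close 1 (Z.of_nat N + 2) y1 y2); auto; lia.
  - apply (Close 1 (2 * Z.of_nat N + 3) y1 y3); auto; lia.
  - apply (Close (Z.of_nat N + 2) (2 * Z.of_nat N + 3) y2 y3); auto; lia.
  - apply (Close (Z.of_nat N + 2) (2 * Z.of_nat N + 3) y2 y3); auto; lia.
  - apply (Close 1 (2 * Z.of_nat N + 3) y1 y3); auto; lia.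
  - apply (Close 1 (Z.of_nat N + 2) y1 y2); auto; lia.
  - apply (Close 1 (Z.of_nat N + 2) y1 y2); auto; lia.
Qed.
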